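(* Let $n,k,r$ be integers with $k,r\geq 2$, $k<r$ and $n\geq k+r$, and let $H$ be a vertex-$k$-maximal $r$-uniform hypergraph on $n$ vertices. Let $S$ be a minimum vertex-cut of $H$, $C_1$ a component of $H-S$, $C_2=H-(V(C_1)\cup S)$, $H_1=H[V(C_1)\cup S]$ and $H_2=H[V(C_2)\cup S]$. Then both $H_1$ and $H_2$ are vertex-$k$-maximal $r$-uniform hypergraphs.
   Context: A hypergraph $H=(V,E)$ consists of a finite vertex set $V$ and a set $E$ of non-empty subsets of $V$ (edges); it is $r$-uniform if all edges have exactly $r$ elements. The complement $H^c$ has as edges the $r$-subsets of $V$ not in $E$. A subhypergraph is $H'=(V',E')$ with $V'\subseteq V$, $E'\subseteq E$. $H+e=(V,E\cup\{e\})$ for $e\in E(H^c)$. For $Y\subseteq V$, $H[Y]$ is the induced hypergraph with vertex set $Y$ and edges $\{e\in E: e\subseteq Y\}$, and $H-Y=H[V\setminus Y]$. Connectedness and components are defined via paths (alternating sequences of distinct vertices and distinct edges with consecutive vertices in the intermediate edge). A vertex-cut is a set $X$ with $H-X$ disconnected. $\kappa(H)$ is the minimum size of a vertex-cut if one exists, and $|V(H)|-1$ otherwise. $\overline{\kappa}(H)=\max\{\kappa(H'): H'\subseteq H\}$. An $r$-uniform hypergraph $H$ is vertex-$k$-maximal if $\overline{\kappa}(H)\leq k$ but $\overline{\kappa}(H+e)\geq k+1$ for every $e\in E(H^c)$. *)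

(* Defs.v *)
From mathcomp Require Import all_boot.
Set Implicit Arguments. Unset Strict Implicit. Unset Printing Implicit Defensive.

Record hypergraph (T : finType) := Hypergraph {
  hV : {set T};
  hE : {set {set T}} }.

Section Hyper.
Variable T : finType.
Implicit Types (H : hypergraph T) (X Y : {set T}).

Definition wf H := forall e, e \in hE H -> e \subset hV H /\ e != set0.

Definition uniform (r : nat) H := forall e, e \in hE H -> #|e| = r.

Definition compl_edge (r : nat) H (e : {set T}) :=
  [/\ e \subset hV H, #|e| = r & e \notin hE H].

Definition subhg (H' H : hypergraph T) :=
  [/\ hV H' \subset hV H, hE H' \subset hE H & wf H'].

Definition add_edge H (e : {set T}) := Hypergraph (hV H) (e |: hE H).

Definition induced H Y := Hypergraph Y [set e in hE H | e \subset Y].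

Definition hdel H X := induced H (hV H :\: X).

Definition adj H : rel T := fun x y => [exists e in hE H, (x \in e) && (y \in e)].

Definition connected H := forall x y, x \in hV H -> y \in hV H -> connect (adj H) x y.

Definition comp_of H (x : T) := [set y in hV H | connect (adj H) x y].

Definition vcut H X := X \subset hV H /\ ~ connected (hdel H X).

Definition vcutb H X := (X \subset hV H) && ~~ [forall x in hV (hdel H X),
  forall y in hV (hdel H X), connect (adj (hdel H X)) x y].

Definition kappa H : nat :=
  if [exists X, vcutb H X] then \big[minn/#|hV H|]_(X | vcutb H X) #|X|
  else #|hV H|.-1.

Definition subhgb (H' H : hypergraph T) :=
  [&& hV H' \subset hV H, hE H' \subset hE H &
      [forall e in hE H', (e \subset hV H') && (e != set0)]].

Definition kappa_bar H : nat :=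
  \max_(p : {set T} * {set {set T}} | subhgb (Hypergraph p.1 p.2) H)
     kappa (Hypergraph p.1 p.2).

Definition min_vcut H S := vcut H S /\ forall X, vcut H X -> #|S| <= #|X|.

Definition vertex_k_maximal (k r : nat) H :=
  [/\ wf H, uniform r H, kappa_bar H <= k &
      forall e, compl_edge r H e -> k.+1 <= kappa_bar (add_edge H e)].

End Hyper.

(* Main.v *)
Require Import Defs.
From mathcomp Require Import all_boot.
Set Implicit Arguments. Unset Strict Implicit.

Section S.
Variable T : finType.
Implicit Types (H G : hypergraph T).

Lemma my_bigmin_le (I : eqType) (r : seq I) (P : pred I) (F : I -> nat) x0 i :
  i \in r -> P i -> \big[minn/x0]_(j <- r | P j) F j <= F i.
Proof.
elim: r => //= j r IH; rewrite in_cons big_cons; case/orP => [/eqP<-|hi] hP.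
  by rewrite hP geq_minl.
case: ifP => _; [exact: leq_trans (geq_minr _ _) (IH hi hP) | exact: IH].
Qed.

Lemma kappa_le G X : vcutb G X -> kappa G <= #|X|.
Proof.
move=> hX; rewrite /kappa.
have ->: [exists X, vcutb G X] by apply/existsP; exists X.
by apply: my_bigmin_le; rewrite ?mem_index_enum.
Qed.

Lemma kappa_bar_ge G V' E' : subhgb (Hypergraph V' E') G -> kappa (Hypergraph V' E') <= kappa_bar G.
Proof.
move=> h; rewrite /kappa_bar.
exact: (@leq_bigmax_cond _ (fun p : {set T} * {set {set T}} => subhgb (Hypergraph p.1 p.2) G)
   (fun p => kappa (Hypergraph p.1 p.2)) (V', E')).
Qed.

Lemma vcut_b G X : vcut G X -> vcutb G X.
Proof.
move=> [hX hc]; rewrite /vcutb hX /=; apply/negP => hf; apply: hc => y z hy hz.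
by move/forallP: hf => /(_ y) /implyP /(_ hy) /forallP /(_ z) /implyP /(_ hz).
Qed.

Lemma b_vcut G X : vcutb G X -> vcut G X.
Proof.
move=> /andP [hX hnc]; split=> // hc; move/negP: hnc; apply.
apply/forallP => y; apply/implyP => hy; apply/forallP => z; apply/implyP => hz; exact: hc.
Qed.

Lemma kappa_ge_S H S : min_vcut H S -> #|S| <= kappa H.
Proof.
move=> [hS hmin]; have hb := vcut_b hS; rewrite /kappa.
have ->: [exists X, vcutb H X] by apply/existsP; exists S.
apply: (big_ind (fun y => #|S| <= y)).
- by case: hS => hSV _; exact: subset_leq_card.
- by move=> a b ha hb'; rewrite leq_min ha hb'.
move=> X hX; apply: hmin; exact: b_vcut.
Qed.

Lemma kappa_le_bar H : wf H -> kappa H <= kappa_bar H.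
Proof.
case: H => V E hw; apply: kappa_bar_ge; rewrite /subhgb /= !subxx /=.
apply/forallP => e; apply/implyP => he; case: (hw e he) => -> -> //.
Qed.

Lemma bar_mono H G : (forall V' E', subhgb (Hypergraph V' E') G -> subhgb (Hypergraph V' E') H) ->
  kappa_bar G <= kappa_bar H.
Proof.
move=> hs; apply/bigmax_leqP => p hp; case: p hp => V' E' /= hp.
exact: kappa_bar_ge (hs _ _ hp).
Qed.


Lemma key H (S A e : {set T}) (u : T) (V' : {set T}) (E' : {set {set T}}) :
  (forall f, f \in hE H -> [disjoint f & S] -> forall y z, y \in f -> z \in f -> y \in A -> z \in A) ->
  [disjoint A & S] ->
  e \subset A :|: S -> u \in e -> u \in A ->
  subhgb (Hypergraph V' E') (add_edge H e) -> e \in E' ->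
  #|S| < kappa (Hypergraph V' E') ->
  V' \subset A :|: S.
Proof.
move=> hcl hAS heA hue huA /and3P [/= hVV hEE /forallP hwf] heE hk.
apply/subsetP => v hv; rewrite in_setU; apply/negPn/negP; rewrite negb_or => /andP [hvA hvS].
set X := S :&: V'.
have huS : u \notin S by rewrite (disjointFr hAS huA).
have huV : u \in V'.
  by move/implyP: (hwf e) => /(_ heE) /andP [/subsetP /(_ u hue)].
have hcut : vcutb (Hypergraph V' E') X.
  rewrite /vcutb subsetIr /=; apply/negP => /forallP /(_ u) /implyP.
  rewrite /= !inE huV (negbTE huS) /= => /(_ isT) /forallP /(_ v) /implyP.
  rewrite /= !inE (negbTE hvS) hv => /(_ isT) hc.
  have hcl' : closed (adj (hdel (Hypergraph V' E') X)) A.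
    move=> y z /existsP [f /andP [hf /andP [hyf hzf]]].
    move: hf; rewrite /hdel /induced /= inE => /andP [hfE hfV].
    have hfS : [disjoint f & S].
      rewrite disjoint_subset; apply/subsetP => s hsf; rewrite !inE; apply/negP => hsS.
      move/subsetP: hfV => /(_ s hsf).
      by rewrite !inE hsS /= => /andP [/negP]...
    have hfA : f \in e |: hE H -> f = e \/ f \in hE H.
      by rewrite in_setU1 => /orP [/eqP|]; [left|right].
    case: (hfA (subsetP hEE f hfE)) => [hfe|hfH].
      have inA : forall w, w \in f -> w \in A.
        move=> w hw; move/subsetP: heA => /(_ w); rewrite -hfe => /(_ hw).
        rewrite in_setU => /orP [] // hwS.
        by rewrite (disjointFr hfS hw) in hwS.
      by rewrite (inA y hyf) (inA z hzf).
    by apply/idP/idP; [exact: (hcl f hfH hfS y z hyf hzf) | exact: (hcl f hfH hfS z y hzf hyf)].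
  by move: (closed_connect hcl' hc); rewrite huA (negbTE hvA).
have := kappa_le hcut.
have : #|X| <= #|S| by apply: subset_leq_card; apply: subsetIl.
move=> h1 h2; move: (leq_trans h2 h1); rewrite leqNgt hk.
done.
Qed.


Lemma part (k r : nat) H (S A : {set T}) :
  vertex_k_maximal k r H -> #|S| <= k -> k < r ->
  A \subset hV H -> S \subset hV H -> [disjoint A & S] ->
  (forall f, f \in hE H -> [disjoint f & S] -> forall y z, y \in f -> z \in f -> y \in A -> z \in A) ->
  vertex_k_maximal k r (induced H (A :|: S)).
Proof.
move=> [hwf hun hbar hmax] hSk hkr hAV hSV hAS hcl.
have hYV : A :|: S \subset hV H by rewrite subUset hAV hSV.
have hsub : forall V' E', subhgb (Hypergraph V' E') (induced H (A :|: S)) -> subhgb (Hypergraph V' E') H.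
  move=> V' E' /and3P [/= h1 h2 h3]; apply/and3P; split=> //=.
    exact: subset_trans h1 hYV.
  apply: subset_trans h2 _; apply/subsetP => f; rewrite inE => /andP [] //.
split.
- move=> f /=; rewrite inE => /andP [hf hfY]; split; last by case: (hwf f hf).
  exact: hfY.
- by move=> f /=; rewrite inE => /andP [hf _]; apply: hun.
- by apply: leq_trans hbar; apply: bar_mono.
move=> e [/= heY her heN].
have heH : e \notin hE H by apply: contra heN => he; rewrite inE he heY.
have := hmax e (And3 (subset_trans heY hYV) her heH).
have [/existsP [[V' E'] /andP [/= hp hkp]] | hne] :=
  boolP [exists p : {set T} * {set {set T}}, subhgb (Hypergraph p.1 p.2) (add_edge H e) && (k < kappa (Hypergraph p.1 p.2))]; last first.
  move=> hlt; exfalso; move: hlt; rewrite ltnNge; move/negP; apply.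
  apply/bigmax_leqP => p hp; rewrite leqNgt; apply/negP => hlt.
  by move/negP: hne; apply; apply/existsP; exists p; rewrite hp hlt.
move=> _.
have heE : e \in E'.
  apply/negPn/negP => heE; move: hkp; rewrite ltnNge; move/negP; apply.
  apply: leq_trans hbar; apply: kappa_bar_ge.
  move: hp => /and3P [/= h1 h2 h3]; apply/and3P; split=> //=.
  apply/subsetP => f hf; move/subsetP: h2 => /(_ f hf); rewrite in_setU1 => /orP [/eqP hfe|] //.
  by move: hf; rewrite hfe (negbTE heE).
have [u hue huS] : exists2 u, u \in e & u \notin S.
  apply/subsetPn; apply/negP => heS; move: (subset_leq_card heS); rewrite her.
  by move=> h; move: (leq_ltn_trans h (leq_ltn_trans hSk hkr)); rewrite ltnn.
have huA : u \in A.
  by move/subsetP: heY => /(_ u hue); rewrite in_setU (negbTE huS) orbF.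
have hVA := key hcl hAS heY hue huA hp heE (leq_ltn_trans hSk hkp).
apply: leq_trans hkp _; apply: kappa_bar_ge.
move: hp => /and3P [/= h1 h2 h3]; apply/and3P; split=> //=.
apply/subsetP => f hf; move/subsetP: h2 => /(_ f hf); rewrite !in_setU1 => /orP [-> //|hfH].
move/forallP: h3 => /(_ f) /implyP /(_ hf) /andP [hfV _].
by rewrite inE hfH (subset_trans hfV hVA) orbT.
Qed.

End S.

Theorem mainTheorem8 (T : finType) (n k r : nat) (H : hypergraph T)
  (S : {set T}) (x : T) :
  2 <= k -> 2 <= r -> k < r -> k + r <= n ->
  #|hV H| = n ->
  vertex_k_maximal k r H ->
  min_vcut H S ->
  x \in hV (hdel H S) ->
  let VC1 := comp_of (hdel H S) x in
  let VC2 := hV (hdel H (VC1 :|: S)) in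
  let H1 := induced H (VC1 :|: S) in
  let H2 := induced H (VC2 :|: S) in
  vertex_k_maximal k r H1 /\ vertex_k_maximal k r H2.
Proof.
move=> _ _ hkr _ _ hvk hmin hx VC1 VC2 H1 H2.
have hSk : #|S| <= k.
  case: hvk => hwf _ hbar _.
  exact: leq_trans (kappa_ge_S hmin) (leq_trans (kappa_le_bar hwf) hbar).
have hSV : S \subset hV H by case: hmin => [[]].
have hwf : wf H by case: hvk.
have hV1 : VC1 \subset hV H :\: S.
  by apply/subsetP => y; rewrite /VC1 /comp_of inE => /andP [].
have cl1 : forall f, f \in hE H -> [disjoint f & S] -> forall y z, y \in f -> z \in f -> y \in VC1 -> z \in VC1.
  move=> f hf hfS y z hy hz; rewrite /VC1 /comp_of !inE => /andP [hyV hc].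
  have hzV : z \in hV H :\: S.
    by rewrite inE (disjointFr hfS hz) /=; case: (hwf f hf) => /subsetP /(_ z hz).
  move: hzV; rewrite inE => -> /=; apply: connect_trans hc (connect1 _).
  apply/existsP; exists f; rewrite hy hz !andbT /= inE hf /=.
  apply/subsetP => w hw; rewrite inE (disjointFr hfS hw) /=.
  by case: (hwf f hf) => /subsetP /(_ w hw).
split.
  apply: part hvk hSk hkr _ hSV _ cl1.
  - exact: subset_trans hV1 (subsetDl _ _).
  - by rewrite disjoint_subset; apply: subset_trans hV1 _; apply/subsetP => y; rewrite !inE => /andP [].
apply: part hvk hSk hkr _ hSV _ _.
- by apply/subsetP => y; rewrite /VC2 /= inE => /andP [].
- by rewrite disjoint_subset; apply/subsetP => y; rewrite /VC2 /= !inE negb_or => /andP [/andP []].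
move=> f hf hfS y z hy hz; rewrite /VC2 /= !in_setD !in_setU !negb_or => /andP [/andP [hy1 hyS] hyV].
have hzS : z \notin S by rewrite (disjointFr hfS hz).
rewrite hzS /= andbT; apply/andP; split.
  by apply/negP => hz1; move/negP: hy1; apply; exact: (cl1 f hf hfS z y hz hy hz1).
by case: (hwf f hf) => /subsetP /(_ z hz).
Qed.
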